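(* For $l\in\mathbb N$, $a>0$ and $b>0$, $$\sum_{k=0}^{l-1}\binom{k+l}{l}\frac{a^kb^l+a^lb^k}{(a+b)^{k+l}(k+l)}=\frac1l.$$ *)

(* Defs.v *)
From mathcomp Require Import all_boot all_order all_algebra.
Set Implicit Arguments. Unset Strict Implicit. Unset Printing Implicit Defensive.

(* Main.v *)
Require Import Defs.
From mathcomp Require Import all_boot all_order all_algebra.
From mathcomp Require Import ring.
Import Order.TTheory GRing.Theory Num.Theory.
Local Open Scope ring_scope.

Lemma binC (a b : nat) : 'C(a + b, a) = 'C(a + b, b).
Proof. by rewrite -bin_sub ?leq_addr // addKn. Qed.

Definition H {R : comNzRingType} (x y : R) (m n : nat) : R :=
  \sum_(k < n) ('C(m + k, m))%:R * x ^+ m.+1 * y ^+ k.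

Lemma Lstep (R : comNzRingType) (p q : R) (hpq : p + q = 1) (n m : nat) :
  H q p n m.+1 = H q p n.+1 m.+1 + ('C(m + n.+1, m))%:R * p ^+ m.+1 * q ^+ n.+1.
Proof.
rewrite /H; elim: m => [|m IH].
  rewrite !big_ord_recr !big_ord0 /= !add0r !addn0 !binn ?bin0.
  rewrite !exprS; set t := q ^+ n.
  have -> : q = 1 - p by rewrite -hpq; ring.
  ring.
rewrite big_ord_recr /= IH [in RHS]big_ord_recr /=.
have -> : ('C(n.+1 + m.+1, n.+1) = 'C(n + m.+1, n.+1) + 'C(n + m.+1, n))%N.
  by rewrite addSn binS.
have -> : ('C(m.+1 + n.+1, m.+1) = 'C(n + m.+1, n.+1) + 'C(n + m.+1, n))%N.
  by rewrite binC addnC addSn binS.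
rewrite !exprS; set t := q ^+ n; set u := p ^+ m.
have -> : ('C(m + n.+1, m) = 'C(n + m.+1, n.+1))%N.
  by rewrite binC addnC !addnS addSn.
rewrite !natrD.
have -> : q = 1 - p by rewrite -hpq; ring.
set S := \sum_(k < m.+1) _.
ring.
Qed.

Lemma Fbase (R : comNzRingType) (p q : R) (hpq : p + q = 1) (m : nat) :
  H p q m 1 + H q p 0 m.+1 = 1.
Proof.
rewrite /H big_ord_recr big_ord0 /= add0r addn0 binn mul1r.
elim: m => [|m IH].
  by rewrite big_ord1 /= bin0 !expr1 !expr0 !mulr1 mul1r.
rewrite big_ord_recr /= -[RHS]IH bin0.
rewrite !exprS !expr0 !mulr1; set u := p ^+ m.
have -> : q = 1 - p by rewrite -hpq; ring.
set S := \sum_(k < m.+1) _.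
ring.
Qed.

Lemma Fall (R : comNzRingType) (p q : R) (hpq : p + q = 1) (m n : nat) :
  H p q m n.+1 + H q p n m.+1 = 1.
Proof.
elim: n => [|n IH]; first exact: Fbase.
rewrite -IH [in RHS](@Lstep _ p q hpq n m).
have -> : H p q m n.+2 = H p q m n.+1 + ('C(m + n.+1, m))%:R * p ^+ m.+1 * q ^+ n.+1.
  by rewrite /H big_ord_recr.
set A := H _ _ _ _; set B := H _ _ _ _; set C := _ * _ ^+ _.
by rewrite -!addrA (addrC C).
Qed.

From mathcomp Require Import lra.
Theorem lemma2p2 (R : realFieldType) (l : nat) (a b : R)
  (hl : (0 < l)%N) (ha : 0 < a) (hb : 0 < b) :
  \sum_(0 <= k < l)
     ('C(k + l, l))%:R * (a ^+ k * b ^+ l + a ^+ l * b ^+ k)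
       / ((a + b) ^+ (k + l) * (k + l)%:R)
  = (l%:R)^-1.
Proof.
case: l hl => [//|l] _.
have hab : a + b != 0 by rewrite gt_eqF // addr_gt0.
set p := a / (a + b); set q := b / (a + b).
have hpq : p + q = 1 by rewrite /p /q -mulrDl divff.
transitivity ((l.+1)%:R^-1 * (H p q l l.+1 + H q p l l.+1)); last by rewrite (@Fall _ p q hpq l l) mulr1.
rewrite /H -big_split /= mulr_sumr big_mkord.
apply: eq_bigr => k _.
have hc : ('C(k + l.+1, l.+1))%:R = (k + l.+1)%:R * ('C(l + k, l))%:R / (l.+1)%:R :> R.
  apply: (canRL (mulfK _)); first by rewrite pnatr_eq0.
  by rewrite -!natrM addnS mulnC -mul_bin_diag /= addnC.
rewrite hc /p /q !expr_div_n exprD.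
have h1 : (k + l.+1)%:R != 0 :> R by rewrite pnatr_eq0 addnS. Show.
have h2 : (l.+1)%:R != 0 :> R by rewrite pnatr_eq0.
have h3 : (a + b) ^+ k != 0 by rewrite expf_neq0.
have h4 : (a + b) ^+ l.+1 != 0 by rewrite expf_neq0.
move: h1 h2 h3 h4.
set A := a ^+ k; set B := b ^+ l.+1; set A' := a ^+ l.+1; set B' := b ^+ k.
set Sk := (a + b) ^+ k; set Sl := (a + b) ^+ l.+1; set N := (k + l.+1)%:R; set L := (l.+1)%:R.
set D := ('C(l + k, l))%:R => h1 h2 h3 h4.
by field; rewrite h3 h4 /= (addrC 1) natr1 -natrD !pnatr_eq0 ?addnS.
Qed.
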